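(* Every almost reciprocal Puiseux monoid has unique atomic decomposition.
   Context: A Puiseux monoid is an additive submonoid of $(\mathbb{Q}_{\ge 0},+)$. For a positive rational $r = n/d$ in lowest terms, $\mathsf{d}(r) := d$. An almost reciprocal Puiseux monoid is a monoid of the form $\langle \frac{c_n}{d_n} \mid n \in \mathbb{N} \rangle$, where $(d_n)_{n\ge 1}$ is a strictly increasing sequence of positive integers whose terms are pairwise relatively prime, and $(c_n)_{n \ge 1}$ is a sequence of positive integers with $\gcd(c_n,d_n)=1$ for every $n$. An atom of $M$ is a nonzero element $a$ such that $a=x+y$ with $x,y\in M$ forces $x=0$ or $y=0$; $M$ is atomic if each element is a finite sum of atoms (almost reciprocal Puiseux monoids are atomic). Let $M$ be an atomic Puiseux monoid with set of atoms $\mathcal{A}(M) = \{a_n \mid n \in \mathbb{N}\}$. For $x \in M$, an atomic decomposition of $x$ is an expression $x = N + \sum_{i \in \mathbb{N}} c_i a_i$ (equality in $\mathbb{Q}$) with $N \in \mathbb{N}_0$ and $c_i \in \{0,1,\dots,\mathsf{d}(a_i)-1\}$ for every $i$, only finitely many $c_i$ nonzero. $M$ has unique atomic decomposition if every element of $M$ has exactly one atomic decomposition. *)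

(* Defs.v *)
From mathcomp Require Import all_boot all_order all_algebra.
Set Implicit Arguments. Unset Strict Implicit. Unset Printing Implicit Defensive.
Import Order.TTheory GRing.Theory Num.Theory.
Local Open Scope ring_scope.

Definition gen_monoid (g : nat -> rat) (x : rat) : Prop :=
  exists s : seq nat, x = \sum_(i <- s) g i.

Definition almost_reciprocal_data (c d : nat -> nat) : Prop :=
  [/\ forall n, (0 < d n)%N,
      forall m n, (m < n)%N -> (d m < d n)%N,
      forall m n, m <> n -> coprime (d m) (d n),
      forall n, (0 < c n)%N &
      forall n, coprime (c n) (d n)].

Definition ar_gen (c d : nat -> nat) (n : nat) : rat := (c n)%:R / (d n)%:R.

Definition is_atom (M : rat -> Prop) (a : rat) : Prop :=
  [/\ M a, a <> 0 &
      forall x y, M x -> M y -> a = x + y -> x = 0 \/ y = 0].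

Definition atomic_decomposition (M : rat -> Prop) (x : rat)
    (N : nat) (f : rat -> nat) : Prop :=
  exists s : seq rat,
    [/\ uniq s,
        forall a, a \in s -> is_atom M a,
        forall a, a \notin s -> f a = 0%N,
        forall a, is_atom M a -> ((f a)%:Z < denq a)%R &
        x = N%:R + \sum_(a <- s) (f a)%:R * a].

(* Unique atomic decomposition: every element has exactly one atomic
   decomposition (the coefficient functions agree on every atom, hence
   everywhere since they vanish off atoms). *)
Definition has_unique_atomic_decomposition (M : rat -> Prop) : Prop :=
  forall x, M x ->
    (exists N f, atomic_decomposition M x N f) /\
    (forall N1 f1 N2 f2, atomic_decomposition M x N1 f1 ->
       atomic_decomposition M x N2 f2 -> N1 = N2 /\ forall a, f1 a = f2 a).

(* Main.v *)
Require Import Defs.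
From mathcomp Require Import all_boot all_order all_algebra.
From mathcomp Require Import lra.
Set Implicit Arguments. Unset Strict Implicit. Unset Printing Implicit Defensive.
Import Order.TTheory GRing.Theory Num.Theory.
Local Open Scope ring_scope.

Definition isint (r : rat) := exists z : int, r = z%:~R.

Lemma isintD r1 r2 : isint r1 -> isint r2 -> isint (r1 + r2).
Proof. by move=> [z1 ->] [z2 ->]; exists (z1 + z2); rewrite rmorphD. Qed.
Lemma isintN r : isint r -> isint (- r).
Proof. by move=> [z ->]; exists (- z); rewrite rmorphN. Qed.
Lemma isintM r1 r2 : isint r1 -> isint r2 -> isint (r1 * r2).
Proof. by move=> [z1 ->] [z2 ->]; exists (z1 * z2); rewrite rmorphM. Qed.
Lemma isint_nat (n : nat) : isint n%:R.
Proof. by exists n%:Z. Qed.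
Lemma isint_int (z : int) : isint z%:~R.
Proof. by exists z. Qed.

Lemma natz_rat (n : nat) : ((n%:Z)%:~R : rat) = n%:R.
Proof. by []. Qed.

Lemma split_sum (s : seq rat) (F : rat -> rat) a : uniq s -> (a \notin s -> F a = 0) ->
  \sum_(b <- s) F b = F a + \sum_(b <- s | b != a) F b.
Proof.
move=> us Fa; case: (boolP (a \in s)) => ha; first exact: bigD1_seq.
rewrite Fa // add0r [RHS]big_mkcond /=; apply: eq_big_seq => b hb.
by case: (eqVneq b a) => [eb|//]; rewrite -eb hb in ha.
Qed.

Lemma sum_support (s1 s2 : seq rat) (f : rat -> nat) : uniq s1 -> uniq s2 ->
  (forall a, a \notin s1 -> f a = 0%N) -> (forall a, a \notin s2 -> f a = 0%N) ->
  \sum_(b <- s1) (f b)%:R * b = \sum_(b <- s2) (f b)%:R * b.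
Proof.
move=> u1 u2 Z1 Z2.
have E : forall s : seq rat, \sum_(b <- s) (f b)%:R * b = \sum_(b <- s | f b != 0%N) (f b)%:R * b.
  move=> s; rewrite [RHS]big_mkcond; apply: eq_bigr => b _.
  by case: ifP => // /negPn/eqP ->; rewrite mul0r.
rewrite !E -!(big_filter _ (fun b => f b != 0%N)); apply: perm_big.
apply: uniq_perm; rewrite ?filter_uniq // => b; rewrite !mem_filter.
case: (eqVneq (f b) 0%N) => //= fb.
case: (boolP (b \in s1)) => h1; case: (boolP (b \in s2)) => h2 //.
  by rewrite Z2 ?eqxx in fb.
by rewrite Z1 ?eqxx in fb.
Qed.

Section S.
Variables c d : nat -> nat.
Hypothesis dpos : forall n, (0 < d n)%N.
Hypothesis dcop : forall m n, m <> n -> coprime (d m) (d n).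
Hypothesis ccop : forall n, coprime (c n) (d n).
Local Notation g := (ar_gen c d).

Definition good n (y : rat) := exists P : nat, coprime P (d n) /\ isint (P%:R * y).

Lemma goodD n y1 y2 : good n y1 -> good n y2 -> good n (y1 + y2).
Proof.
move=> [P1 [cP1 i1]] [P2 [cP2 i2]]; exists (P1 * P2)%N; split.
  by rewrite coprimeMl cP1 cP2.
rewrite natrM mulrDr; apply: isintD.
  by rewrite mulrAC; apply: isintM => //; apply: isint_nat.
by rewrite -mulrA; apply: isintM => //; apply: isint_nat.
Qed.

Lemma goodN n y : good n y -> good n (- y).
Proof. by move=> [P [cP i]]; exists P; split => //; rewrite mulrN; apply: isintN. Qed.

Lemma g_mul_d j : (d j)%:R * g j = (c j)%:R.
Proof.
rewrite /ar_gen mulrC divfK //; by rewrite pnatr_eq0 gtn_eqF ?dpos.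
Qed.

Lemma good_sum n (s : seq rat) (w : rat -> int) :
  (forall b, b \in s -> exists2 j, j <> n & b = g j) ->
  good n (\sum_(b <- s) (w b)%:~R * b).
Proof.
elim: s => [|b s IH] H.
  by exists 1%N; split; [exact: coprime1n | rewrite big_nil mulr0; exists 0].
rewrite big_cons; apply: goodD; last by apply: IH => b' hb'; apply: H; rewrite inE hb' orbT.
have [j jn ->] := H b (mem_head _ _).
exists (d j); split; first exact: dcop.
by rewrite mulrCA g_mul_d; apply: isintM; [apply: isint_int | apply: isint_nat].
Qed.

Lemma key n (h : int) y : good n y -> isint (h%:~R * g n + y) -> (d n %| h)%Z.
Proof.
move=> [P [cP iy]] ih.
have : isint (P%:R * (h%:~R * g n)).
  by have := isintD (isintM (isint_nat P) ih) (isintN iy); rewrite mulrDr addrK.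
move=> [z hz].
have E : ((P%:Z * h * c n)%R = z * d n)%R.
  apply: (@intr_inj rat).
  rewrite !rmorphM /= !natz_rat -hz /ar_gen.
  rewrite mulrA [_ * (_ / _)]mulrA divfK //; by rewrite pnatr_eq0 gtn_eqF ?dpos.
have : (d n %| P%:Z * h * c n)%Z by rewrite E; apply: dvdz_mull; apply: dvdzz.
rewrite Gauss_dvdzl; last by rewrite coprimezE /= coprime_sym.
rewrite Gauss_dvdzr //; by rewrite coprimezE /= coprime_sym.
Qed.

Lemma denq_g n : denq (g n) = d n.
Proof.
rewrite /ar_gen -!natz_rat coprimeq_den //=.
by have := dpos n; case: (d n).
Qed.

Hypothesis cpos : forall n, (0 < c n)%N.
Local Notation M := (gen_monoid g).

Lemma gpos j : 0 < g j.
Proof. by rewrite /ar_gen divr_gt0 // ltr0n. Qed.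

Lemma sum_ge0 (t : seq nat) : 0 <= \sum_(i <- t) g i.
Proof. by apply: sumr_ge0 => i _; apply: ltW; apply: gpos. Qed.

Lemma sum_mem (t : seq nat) j : j \in t -> g j <= \sum_(i <- t) g i.
Proof.
move=> hj; rewrite (big_rem j hj) /= lerDl; exact: sum_ge0.
Qed.

Lemma atom_is_gen a : is_atom M a -> exists n, a = g n.
Proof.
move=> [[t ->] a0 H]; case: t a0 H => [|j t]; first by rewrite big_nil.
move=> _ H; exists j.
have Mj : M (g j) by exists [:: j]; rewrite big_seq1.
have Mt : M (\sum_(i <- t) g i) by exists t.
case: (H _ _ Mj Mt); first by rewrite big_cons.
  by move=> gj0; have := gpos j; rewrite gj0 ltxx.
by rewrite big_cons => ->; rewrite addr0.
Qed.

Lemma gen_atom n : (1 < d n)%N -> is_atom M (g n).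
Proof.
move=> dn1; split; first by exists [:: n]; rewrite big_seq1.
  by have := gpos n; rewrite lt0r => /andP[/eqP].
move=> x y [t1 ->] [t2 ->] E.
case: (eqVneq (\sum_(i <- t1) g i) 0) => [-> | x0]; first by left.
case: (eqVneq (\sum_(i <- t2) g i) 0) => [-> | y0]; first by right.
exfalso.
have xp : 0 < \sum_(i <- t1) g i by rewrite lt0r x0 sum_ge0.
have yp : 0 < \sum_(i <- t2) g i by rewrite lt0r y0 sum_ge0.
case: (boolP (n \in t1)) => [h1|h1].
  have := sum_mem h1; rewrite E => ?; lra.
case: (boolP (n \in t2)) => [h2|h2].
  have := sum_mem h2; rewrite E => ?; lra.
have G : good n (\sum_(b <- map g (t1 ++ t2)) (-1 : int)%:~R * b).
  apply: good_sum => b /mapP [j hj ->]; exists j => // jn.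
  by move: hj; rewrite mem_cat jn (negPf h1) (negPf h2).
have := key G; rewrite big_map big_cat /= -!mulr_sumr -mulrDr -E mulN1r.
move=> /(_ 1); rewrite mul1r subrr => /(_ (isint_int 0)); rewrite dvdz1 /=.
by move=> /eqP dn; rewrite dn in dn1.
Qed.

Lemma uniq_dec x N1 f1 N2 f2 : atomic_decomposition M x N1 f1 ->
  atomic_decomposition M x N2 f2 -> N1 = N2 /\ forall a, f1 a = f2 a.
Proof using All.
move=> [s1 [u1 A1 Z1 B1 E1]] [s2 [u2 A2 Z2 B2 E2]].
have Hf : forall a, f1 a = f2 a.
  move=> a; case: (boolP ((a \in s1) || (a \in s2))) => [hin|]; last first.
    by rewrite negb_or => /andP[h1 h2]; rewrite Z1 ?Z2.
  have Aa : is_atom M a by case/orP: hin => [/A1|/A2].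
  have [n an] := atom_is_gen Aa.
  have b1 := B1 a Aa; have b2 := B2 a Aa; rewrite an denq_g in b1 b2.
  have S1 : \sum_(b <- s1) (f1 b)%:R * b = (f1 a)%:R * a + \sum_(b <- s1 | b != a) (f1 b)%:R * b.
    by apply: split_sum => // h; rewrite Z1 // mul0r.
  have S2 : \sum_(b <- s2) (f2 b)%:R * b = (f2 a)%:R * a + \sum_(b <- s2 | b != a) (f2 b)%:R * b.
    by apply: split_sum => // h; rewrite Z2 // mul0r.
  have G : good n (\sum_(b <- [seq b <- s1 | b != a]) ((f1 b)%:Z)%:~R * b
                 + - \sum_(b <- [seq b <- s2 | b != a]) ((f2 b)%:Z)%:~R * b).
    apply: goodD; last apply: goodN; apply: good_sum => b; rewrite mem_filter => /andP[ba hb].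
      have [j bj] := atom_is_gen (A1 b hb); exists j => // jn.
      by rewrite bj jn -an eqxx in ba.
    have [j bj] := atom_is_gen (A2 b hb); exists j => // jn.
    by rewrite bj jn -an eqxx in ba.
  have := key G (h := (f1 a)%:Z - (f2 a)%:Z).
  rewrite !big_filter -an rmorphB /= !natz_rat.
  have e : N1%:R + ((f1 a)%:R * a + \sum_(b <- s1 | b != a) (f1 b)%:R * b) =
           N2%:R + ((f2 a)%:R * a + \sum_(b <- s2 | b != a) (f2 b)%:R * b).
    by rewrite -S1 -S2 -E1 -E2.
  have -> : ((f1 a)%:R - (f2 a)%:R) * a + (\sum_(b <- s1 | b != a) (f1 b)%:R * b
             - \sum_(b <- s2 | b != a) (f2 b)%:R * b) = N2%:R - N1%:R.
    move: e; rewrite mulrBl.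
    set q1 := _ * a; set q2 := _ * a; set r1 := \sum_(_ <- _ | _) _; set r2 := \sum_(_ <- _ | _) _.
    move=> e; lra.
  move=> /(_ (isintD (isint_nat _) (isintN (isint_nat _)))).
  rewrite -eqz_mod_dvd !modz_nat => /eqP [].
  by rewrite ltz_nat in b1 b2; rewrite an !modn_small.
split => //.
apply/eqP; rewrite -(eqr_nat rat); apply/eqP.
have : N1%:R + \sum_(a <- s1) (f2 a)%:R * a = N2%:R + \sum_(a <- s2) (f2 a)%:R * a.
  by rewrite -E2 E1; congr (_ + _); apply: eq_bigr => b _; rewrite Hf.
rewrite (@sum_support s1 s2 f2) //; first by move=> e; apply: (addIr _ e).
by move=> b hb; rewrite -Hf Z1.
Qed.

Lemma dec_update x N f a (w N' : nat) : is_atom M a -> atomic_decomposition M x N f ->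
  (w%:Z < denq a)%R -> N'%:R + w%:R * a = N%:R + ((f a).+1)%:R * a ->
  atomic_decomposition M (a + x) N' (fun b => if b == a then w else f b).
Proof.
move=> Aa [s [u A Z B E]] wa eN.
exists (if a \in s then s else a :: s).
have ha : a \in (if a \in s then s else a :: s) by case: ifP => h //; rewrite mem_head.
have us : uniq (if a \in s then s else a :: s) by case: ifP => h //=; rewrite h u.
split => //.
- move=> b; case: ifP => h //; first exact: A.
  by rewrite inE => /orP[/eqP -> //|]; apply: A.
- move=> b hb; case: eqVneq => [eb|nb]; first by rewrite eb ha in hb.
  by apply: Z; move: hb; case: ifP => h //; rewrite inE negb_or => /andP[].
- by move=> b Ab; case: eqVneq => [->|_] //; apply: B.
rewrite (@split_sum _ _ a) ?ha // eqxx.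
have -> : \sum_(b <- (if a \in s then s else a :: s) | b != a)
      ((if b == a then w else f b)%:R * b) = \sum_(b <- s | b != a) (f b)%:R * b.
  rewrite (eq_bigr (fun b => (f b)%:R * b)); last by move=> b /negPf ->.
  by case: ifP => h //; rewrite big_cons eqxx.
have S : \sum_(b <- s) (f b)%:R * b = (f a)%:R * a + \sum_(b <- s | b != a) (f b)%:R * b.
  by apply: split_sum => // h; rewrite Z // mul0r.
rewrite E S.
move: eN; rewrite -addn1 natrD mulrDl mul1r.
set u1 := _ * a; set u2 := _ * a; set r := \sum_(_ <- _ | _) _.
move=> eN; lra.
Qed.

Lemma exists_dec (t : seq nat) : exists N f, atomic_decomposition M (\sum_(i <- t) g i) N f.
Proof using All.
elim: t => [|i t [N [f IH]]].
  exists 0%N, (fun _ => 0%N), [::]; split => //;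
    first [by move=> a _; rewrite ltz_nat denq_gt0 | by rewrite !big_nil addr0].
rewrite big_cons.
case: (ltnP 1 (d i)) => di1; last first.
  have di : d i = 1%N by apply/eqP; rewrite eqn_leq di1 dpos.
  exists (N + c i)%N, f; case: IH => s [u A Z B E]; exists s; split => //.
  by rewrite E /ar_gen di divr1 natrD; lra.
have Aa := gen_atom di1.
have fa : (f (g i) < d i)%N.
  by case: IH => s [_ _ _ B _]; have := B _ Aa; rewrite denq_g ltz_nat.
case: (ltnP (f (g i)).+1 (d i)) => hv.
  exists N, (fun b => if b == g i then (f (g i)).+1 else f b).
  by apply: (dec_update Aa IH); rewrite // denq_g ltz_nat.
exists (N + c i)%N, (fun b => if b == g i then 0%N else f b).
apply: (dec_update Aa IH); first by rewrite denq_g ltz_nat dpos.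
have -> : (f (g i)).+1 = d i by apply/eqP; rewrite eqn_leq fa hv.
by rewrite g_mul_d mul0r addr0 natrD.
Qed.

End S.

Unset Implicit Arguments.
Theorem proposition4p3 (c d : nat -> nat) :
  almost_reciprocal_data c d ->
  has_unique_atomic_decomposition (gen_monoid (ar_gen c d)).
Proof.
move=> [dpos dinc dcop cpos ccop] x [t ->]; split.
  exact: (exists_dec dpos dcop ccop cpos).
exact: (uniq_dec dpos dcop ccop cpos).
Qed.
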